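(* Let $t\ge1$ and $n=2(t+1)^2$. Let $\mathcal{C}_0\subseteq\mathbb{Z}_n^2$ be a linear $t$-error-correcting diameter perfect code with generator matrix $G_0$ and $\mathcal{C}=\mathbf{x}+\mathcal{C}_0$ for some $\mathbf{x}=(x_1,x_2)\in\mathbb{Z}_n^2$, of Case I or Case II. Let $\mathcal{S}$ be the set of diameter perfect Sudoku grids with respect to $\mathcal{C}$ and $\bar{\mathcal{S}}$ its set of relabeling classes. (i) If $\mathcal{C}$ is of Case I and $\mathcal{G}_\mathcal{S}=\langle \tau_1^{t+1}\tau_2^{t+1},\ \tau_2^{2(t+1)},\ \tau_2^{2x_2+1}s,\ \tau_1^{2x_1+2}\tau_2^{2x_2+1}r^2\rangle$, then each equivalence class (orbit) in $\bar{\mathcal{S}}$ under the action of $\mathcal{G}_\mathcal{S}$ has size dividing $4n$. (ii) If $\mathcal{C}$ is of Case II, $G_0=[a~~b]$, and $\mathcal{G}_\mathcal{S}=\langle \tau_1^{a}\tau_2^{b},\ \tau_1^{2x_1+2}\tau_2^{2x_2+1}r^2\rangle$, then each equivalence class in $\bar{\mathcal{S}}$ under the action of $\mathcal{G}_\mathcal{S}$ has size dividing $2n$.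
   Context: $\mathbb{Z}_n$ is the integers modulo $n$; Lee weight $\mathrm{wt}_L(\mathbf{u})=\sum_i\min\{u_i,n-u_i\}$, Lee distance $d_L(\mathbf{u},\mathbf{v})=\mathrm{wt}_L(\mathbf{u}-\mathbf{v})$. Linear code = submodule of $\mathbb{Z}_n^2$, generator matrix = matrix whose rows form a minimal spanning set; codes are equivalent if one is the image of the other under a coordinate permutation matrix. $\mathcal{A}_{2t+1}$: set of points within Lee distance $t$ of an adjacent pair (its core); it has $n$ points. A $t$-error-correcting diameter perfect code is a $(2t+1)$-diameter perfect code of size $n$ in $\mathbb{Z}_n^2$ with minimum distance $2t+2$ and anticode $\mathcal{A}_{2t+1}$. Case I: $\mathcal{C}_0$ equivalent to the code generated by $\begin{bmatrix}t+1&t+1\\0&2(t+1)\end{bmatrix}$; Case II: $\mathcal{C}_0$ equivalent to the code generated by $[1~~2t+1]$. For each codeword $\mathbf{c}_i$ of $\mathcal{C}=\{\mathbf{c}_1,\dots,\mathbf{c}_n\}$ take the translate $\mathcal{A}_i$ of $\mathcal{A}_{2t+1}$ with core $\{\mathbf{c}_i,\mathbf{c}_i+(1,0)\}$; the palette grid $\mathcal{I}_{\mathcal{C},\mathcal{A}}$ has entry $i$ at every position $(x,y)\in\mathcal{A}_i$ (row $x$, column $y$). A diameter perfect Sudoku grid is a Latin square of order $n$ on $[n]$ whose pairs of corresponding entries with $\mathcal{I}_{\mathcal{C},\mathcal{A}}$ are all distinct (orthogonality). Relabeling: $S_1\sim S_2$ iff $S_2$ is obtained from $S_1$ by applying a bijection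 $\sigma:[n]\to[n]$ to every entry. Maps on arrays (indices mod $n$): $(r(A))_{i,j}=A_{n-1-j,i}$, $(s(A))_{i,j}=A_{i,n-1-j}$, $(\tau_1(A))_{i,j}=A_{i-1,j}$, $(\tau_2(A))_{i,j}=A_{i,j-1}$. Elements of $\mathcal{G}_\mathcal{S}$ map $\mathcal{S}$ to $\mathcal{S}$ and commute with relabeling, hence act on $\bar{\mathcal{S}}$. *)

(* Defs.v *)
From mathcomp Require Import all_boot all_order all_algebra all_fingroup.
Set Implicit Arguments. Unset Strict Implicit. Unset Printing Implicit Defensive.
Import GRing.Theory.

Section Defs.
Variable n : nat.

(* positions (row x, column y) in Z_n^2 *)
Definition pos := ('Z_n * 'Z_n)%type.

(* Lee weight / distance on Z_n and Z_n^2 (values of 'Z_n are their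
   representatives in [0, n-1], for n >= 2) *)
Definition leeZ (u : 'Z_n) : nat := minn (val u) (n - val u).
Definition wtL (u : pos) : nat := leeZ u.1 + leeZ u.2.
Definition dL (u v : pos) : nat := wtL (u - v)%R.

Definition is_linear (C : {set pos}) : Prop :=
  (0%R \in C) /\ {in C &, forall u v, (u - v)%R \in C}.

Definition min_dist_eq (C : {set pos}) (d : nat) : Prop :=
  (forall c c', c \in C -> c' \in C -> c != c' -> d <= dL c c') /\
  (exists c c', [/\ c \in C, c' \in C, c != c' & dL c c' = d]).

Definition anticode (t : nat) (c : pos) : {set pos} :=
  [set p : pos | (dL p c <= t) || (dL p (c + (1, 0))%R <= t)].

(* linear t-error-correcting diameter perfect code: a (2t+1)-diameter perfect
   code of size n (|C||A_{2t+1}| = n * n = |Z_n^2|) with minimum distance 2t+2 *)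
Definition linear_tEC_DPC (t : nat) (C : {set pos}) : Prop :=
  [/\ is_linear C, #|C| = n, #|anticode t 0%R| = n & min_dist_eq C (2 * t + 2)].

Definition gen1 (g : pos) : {set pos} := [set (g *+ k)%R | k : 'I_n].
Definition gen2 (g h : pos) : {set pos} :=
  [set (g *+ (fst kl) + h *+ (snd kl))%R | kl : 'I_n * 'I_n].

Definition swapc (p : pos) : pos := (p.2, p.1).
(* equivalence under coordinate permutation matrices (identity or swap) *)
Definition code_equiv (C D : {set pos}) : Prop :=
  C = D \/ C = [set swapc p | p in D].

Definition caseI (t : nat) (C0 : {set pos}) : Prop :=
  code_equiv C0 (gen2 ((t.+1)%:R, (t.+1)%:R)%R (0, (2 * t.+1)%:R)%R).
Definition caseII (t : nat) (C0 : {set pos}) : Prop :=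
  code_equiv C0 (gen1 (1, (2 * t + 1)%:R)%R).

Definition translate (x : pos) (C0 : {set pos}) : {set pos} :=
  [set (x + c)%R | c in C0].

(* arrays of order n with entries in [n] (modelled as 'I_n) *)
Definition arr := {ffun pos -> 'I_n}.

(* palette grid: entry i at every position of A_i (core {c_i, c_i+(1,0)}) *)
Definition palette (t : nat) (cw : 'I_n -> pos) (p : pos) : option 'I_n :=
  [pick i | p \in anticode t (cw i)].

Definition latin (A : arr) : Prop :=
  forall p q : pos, p != q -> (p.1 == q.1) || (p.2 == q.2) -> A p != A q.

Definition dp_sudoku (t : nat) (cw : 'I_n -> pos) (A : arr) : Prop :=
  latin A /\
  forall p q : pos, p != q -> (A p, palette t cw p) != (A q, palette t cw q).

Definition relab_class (A : arr) : {set arr} :=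
  [set B : arr | [exists s : {perm 'I_n}, B == [ffun p => s (A p)]]].

Definition pact (f : pos -> pos) (A : arr) : arr := [ffun q => A (f q)].

Lemma pact_inj (f g : pos -> pos) : cancel g f -> injective (pact f).
Proof.
move=> gK A B /ffunP eqAB; apply/ffunP => q.
by have := eqAB (g q); rewrite !ffunE gK.
Qed.

Definition mkperm (f g : pos -> pos) (H : cancel g f) : {perm arr} :=
  perm (pact_inj H).

(* (r A)_{i,j} = A_{n-1-j, i} *)
Definition r_pos (p : pos) : pos := ((- 1 - p.2)%R, p.1).
Definition r_inv (p : pos) : pos := (p.2, (- 1 - p.1)%R).
Lemma r_invK : cancel r_inv r_pos.
Proof. by case=> i j; rewrite /r_pos /r_inv /=; congr (_, _); rewrite opprB addrC subrK. Qed.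

(* (s A)_{i,j} = A_{i, n-1-j} *)
Definition s_pos (p : pos) : pos := (p.1, (- 1 - p.2)%R).
Lemma s_posK : cancel s_pos s_pos.
Proof. by case=> i j; rewrite /s_pos /=; congr (_, _); rewrite opprB addrC subrK. Qed.

Definition t1_pos (p : pos) : pos := ((p.1 - 1)%R, p.2).
Definition t1_inv (p : pos) : pos := ((p.1 + 1)%R, p.2).
Lemma t1_invK : cancel t1_inv t1_pos.
Proof. by case=> i j; rewrite /t1_pos /t1_inv /= addrK. Qed.
Definition t2_pos (p : pos) : pos := (p.1, (p.2 - 1)%R).
Definition t2_inv (p : pos) : pos := (p.1, (p.2 + 1)%R).
Lemma t2_invK : cancel t2_inv t2_pos.
Proof. by case=> i j; rewrite /t2_pos /t2_inv /= addrK. Qed.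

Definition rmap : {perm arr} := mkperm r_invK.
Definition smap : {perm arr} := mkperm s_posK.
Definition tau1 : {perm arr} := mkperm t1_invK.
Definition tau2 : {perm arr} := mkperm t2_invK.

Local Open Scope group_scope.
(* NB: in MathComp, (p * q) x = q (p x); hence the paper's composition
   f g (apply g first) is written g * f below. *)

Definition gensI (t : nat) (x : pos) : {set {perm arr}} :=
  [set tau2 ^+ t.+1 * tau1 ^+ t.+1;
       tau2 ^+ (2 * t.+1);
       smap * tau2 ^+ (2 * val x.2 + 1);
       rmap ^+ 2 * tau2 ^+ (2 * val x.2 + 1) * tau1 ^+ (2 * val x.1 + 2)].

Definition gensII (a b : 'Z_n) (x : pos) : {set {perm arr}} :=
  [set tau2 ^+ val b * tau1 ^+ val a;
       rmap ^+ 2 * tau2 ^+ (2 * val x.2 + 1) * tau1 ^+ (2 * val x.1 + 2)].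

Definition class_orbit (gens : {set {perm arr}}) (A : arr) : {set {set arr}} :=
  [set relab_class ((g : {perm arr}) A) | g in <<gens>>%g].

End Defs.

(* Main.v *)
Require Import Defs.
From mathcomp Require Import all_boot all_order all_algebra all_fingroup all_solvable.
From mathcomp Require Import ring zify.
Set Implicit Arguments. Unset Strict Implicit. Unset Printing Implicit Defensive.
Section G0. Local Open Scope group_scope.

Section G.
Variable gT : finGroupType.
Implicit Types a b c d g : gT.

Lemma gen2E a b : <<[set a; b]>> = <[a]> <*> <[b]>.
Proof. by rewrite joing_idl joing_idr. Qed.

Lemma card2_cent a b na nb : commute a b -> a ^+ na = 1 -> b ^+ nb = 1 ->
  (#|<<[set a; b]>>| %| na * nb)%N.
Proof.
move=> cab ha hb; rewrite gen2E cent_joinEr ?cents_cycle //.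
apply: dvdn_trans (dvdn_cardMg _ _) _; apply: dvdn_mul; rewrite -orderE order_dvdn ?ha ?hb //.
Qed.

Lemma card2_norm a g na : a ^ g \in <[a]> -> a ^+ na = 1 -> g ^+ 2 = 1 ->
  (#|<<[set a; g]>>| %| na * 2)%N.
Proof.
move=> nag ha hg; rewrite gen2E norm_joinEr ?norms_cycle //.
apply: dvdn_trans (dvdn_cardMg _ _) _; apply: dvdn_mul; rewrite -orderE order_dvdn ?ha ?hg //.
Qed.

Lemma inN (S : {set gT}) g : S :^ g \subset <<S>> -> g \in 'N(<<S>>).
Proof.
move=> sS; apply/normP; apply/eqP; rewrite eqEcard cardJg leqnn andbT.
by rewrite -genJ gen_subG.
Qed.

Lemma card4 a b c d : c \in 'N(<<[set a; b]>>) -> d \in 'N(<<[set a; b]>>) ->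
  (#|<<[set a; b; c; d]>>| %| #|<<[set a; b]>>| * #|<<[set c; d]>>|)%N.
Proof.
move=> nc nd.
have -> : [set a; b; c; d] = [set a; b] :|: [set c; d].
  by apply/setP=> z; rewrite !inE !orbA.
rewrite -joingE -joing_idl -joing_idr norm_joinEr ?dvdn_cardMg //.
by rewrite gen_subG; apply/subsetP=> z /set2P[]->.
Qed.

End G.
End G0.
Import GRing.Theory.
Local Open Scope ring_scope.

Section H.
Variable n : nat.
Local Notation arr := (arr n).
Local Notation pos := (pos n).

Definition acts_as (g : {perm arr}) (f : pos -> pos) := forall A, g A = pact f A.
Definition trf (u1 u2 : 'Z_n) (q : pos) : pos := (q.1 - u1, q.2 - u2)%R.

Lemma acts_mul u v fu fv : acts_as u fu -> acts_as v fv ->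
  acts_as (u * v)%g (fun q => fu (fv q)).
Proof. by move=> hu hv A; rewrite permM hu hv; apply/ffunP=> q; rewrite !ffunE. Qed.

Lemma acts_eq g f f' : acts_as g f -> f =1 f' -> acts_as g f'.
Proof. by move=> h e A; rewrite h; apply/ffunP=> q; rewrite !ffunE e. Qed.

Lemma acts_uniq u v f : acts_as u f -> acts_as v f -> u = v.
Proof. by move=> hu hv; apply/permP=> A; rewrite hu hv. Qed.

Lemma acts_one : acts_as 1%g id.
Proof. by move=> A; rewrite perm1; apply/ffunP=> q; rewrite ffunE. Qed.

Lemma acts_exp u w1 w2 k : acts_as u (trf w1 w2) ->
  acts_as (u ^+ k)%g (trf (w1 *+ k) (w2 *+ k)).
Proof.
move=> hu; elim: k => [|k IH].
  by apply: (acts_eq acts_one) => -[q1 q2]; rewrite /trf /= !subr0.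
rewrite expgSr; apply: (acts_eq (acts_mul IH hu)) => -[q1 q2].
by rewrite /trf /= !mulrS !opprD !addrA.
Qed.

Lemma acts_t1 : acts_as (tau1 n) (trf 1 0).
Proof. move=> A; rewrite permE; apply/ffunP=> q; by rewrite !ffunE /trf /t1_pos subr0. Qed.
Lemma acts_t2 : acts_as (tau2 n) (trf 0 1).
Proof. move=> A; rewrite permE; apply/ffunP=> q; by rewrite !ffunE /trf /t2_pos subr0. Qed.
Lemma acts_s : acts_as (smap n) (@s_pos n).
Proof. by move=> A; rewrite permE. Qed.
Lemma acts_r2 : acts_as (rmap n ^+ 2)%g (fun q => (-1 - q.1, -1 - q.2)%R).
Proof.
have hr : acts_as (rmap n) (@r_pos n) by move=> A; rewrite permE.
by rewrite expgS expg1; apply: (acts_eq (acts_mul hr hr)) => -[q1 q2].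
Qed.

Lemma modeq (N : nat) (x y c : 'Z_n) : (N%:R : 'Z_n) = 0 -> x = y + c * N%:R -> x = y.
Proof. by move=> h ->; rewrite h mulr0 addr0. Qed.


Definition rl (s : {perm 'I_n}) (A : arr) : arr := [ffun p => s (A p)].
Definition Pset : {set {perm arr}} :=
  [set g : {perm arr} | [forall s : {perm 'I_n}, forall A : arr, g (rl s A) == rl s (g A)]].
Lemma Pset_gs : group_set Pset.
Proof.
apply/group_setP; split.
  by rewrite inE; apply/forallP=> s; apply/forallP=> A; rewrite !perm1.
move=> g h; rewrite !inE => /forallP hg /forallP hh.
apply/forallP=> s; apply/forallP=> A.
by rewrite !permM (eqP (forallP (hg s) A)) (eqP (forallP (hh s) _)).
Qed.
Canonical Pgrp := Group Pset_gs.

Lemma acts_Pset g f : acts_as g f -> g \in Pset.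
Proof.
move=> h; rewrite inE; apply/forallP=> s; apply/forallP=> A.
by rewrite !h; apply/eqP/ffunP=> q; rewrite !ffunE.
Qed.

Lemma orbit_dvd (gens : {set {perm arr}}) (A : arr) :
  gens \subset Pset -> (#|class_orbit gens A| %| #|<<gens>>%g|)%N.
Proof.
move=> sub.
have sG : (<<gens>> \subset Pgrp)%g by rewrite gen_subG.
suff -> : class_orbit gens A = orbit 'P^* <<gens>>%g (relab_class A) by apply: dvdn_orbit.
apply: eq_in_imset => g gG /=.
have := subsetP sG g gG; rewrite inE => /forallP hg.
apply/setP=> B; rewrite inE; apply/existsP/imsetP.
  case=> s /eqP ->; exists (rl s A); first by rewrite inE; apply/existsP; exists s.
  by rewrite /= apermE (eqP (forallP (hg s) A)).
case=> C; rewrite inE => /existsP[s /eqP ->] ->; exists s.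
by rewrite /= apermE (eqP (forallP (hg s) A)).
Qed.

End H.

Ltac zsolve Hn0 := first [ring | apply: (modeq (c:=1) Hn0); ring | apply: (modeq (c:=-1) Hn0); ring].

Theorem partI (t n : nat) (x : pos n) :
  (1 <= t)%N -> n = (2 * t.+1 ^ 2)%N ->
     forall A : arr n, (#|class_orbit (gensI t x) A| %| 4 * n)%N.
Proof.
move=> t1 Hn A.
have n1 : (1 < n)%N by rewrite Hn; nia.
have Hn0 : ((2 * t.+1 ^ 2)%:R : 'Z_n) = 0 by rewrite -Hn pchar_Zp.
set a := (tau2 n ^+ t.+1 * tau1 n ^+ t.+1)%g.
set b := (tau2 n ^+ (2 * t.+1))%g.
set g3 := (smap n * tau2 n ^+ (2 * val x.2 + 1))%g.
set g4 := (rmap n ^+ 2 * tau2 n ^+ (2 * val x.2 + 1) * tau1 n ^+ (2 * val x.1 + 2))%g.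
set c := ((2 * val x.2 + 1)%:R : 'Z_n).
set d := ((2 * val x.1 + 2)%:R : 'Z_n).
have ha : acts_as a (trf t.+1%:R t.+1%:R).
  apply: acts_eq (acts_mul (acts_exp _ (@acts_t2 n)) (acts_exp _ (@acts_t1 n))) _.
  by move=> -[q1 q2]; rewrite /trf /=; congr pair; ring.
have hb : acts_as b (trf 0 (2 * t.+1)%:R).
  apply: acts_eq (acts_exp _ (@acts_t2 n)) _.
  by move=> -[q1 q2]; rewrite /trf /=; congr pair; ring.
have h3 : acts_as g3 (fun q => (q.1, -1 - q.2 + c)).
  apply: acts_eq (acts_mul (@acts_s n) (acts_exp _ (@acts_t2 n))) _.
  by move=> -[q1 q2]; rewrite /trf /s_pos /=; congr pair; rewrite /c; ring.
have h4 : acts_as g4 (fun q => (-1 - q.1 + d, -1 - q.2 + c)).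
  apply: acts_eq (acts_mul (acts_mul (@acts_r2 n) (acts_exp _ (@acts_t2 n))) (acts_exp _ (@acts_t1 n))) _.
  by move=> -[q1 q2]; rewrite /trf /=; congr pair; rewrite /c /d; ring.
have e_a : (a ^+ (2 * t.+1)%N = 1)%g.
  apply: acts_uniq (acts_exp _ ha) (acts_eq (@acts_one n) _).
  by move=> -[q1 q2]; rewrite /trf /=; congr pair; zsolve Hn0.
have e_b : (b ^+ t.+1 = 1)%g.
  apply: acts_uniq (acts_exp _ hb) (acts_eq (@acts_one n) _).
  by move=> -[q1 q2]; rewrite /trf /=; congr pair; zsolve Hn0.
have e_3 : (g3 * g3 = 1)%g.
  apply: acts_uniq (acts_mul h3 h3) (acts_eq (@acts_one n) _).
  by move=> -[q1 q2] /=; congr pair; zsolve Hn0.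
have e_4 : (g4 * g4 = 1)%g.
  apply: acts_uniq (acts_mul h4 h4) (acts_eq (@acts_one n) _).
  by move=> -[q1 q2] /=; congr pair; zsolve Hn0.
have c34 : commute g3 g4.
  apply: acts_uniq (acts_mul h3 h4) (acts_eq (acts_mul h4 h3) _).
  by move=> -[q1 q2] /=; congr pair; zsolve Hn0.
have cab : commute a b.
  apply: acts_uniq (acts_mul ha hb) (acts_eq (acts_mul hb ha) _).
  by move=> -[q1 q2]; rewrite /trf /=; congr pair; zsolve Hn0.
have i3 : (g3^-1 = g3)%g by apply/eqP; rewrite eq_invg_mul e_3.
have i4 : (g4^-1 = g4)%g by apply/eqP; rewrite eq_invg_mul e_4.
have n3 : g3 \in 'N(<<[set a; b]>>)%g.
  apply: inN; apply/subsetP=> y /imsetP[z /set2P[]-> ->]; rewrite conjgE i3.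
    have -> : (g3 * (a * g3) = a * b ^+ t)%g.
      apply: acts_uniq (acts_mul h3 (acts_mul ha h3)) (acts_eq (acts_mul ha (acts_exp _ hb)) _).
      by move=> -[q1 q2]; rewrite /trf /=; congr pair; zsolve Hn0.
    by apply: groupM; [exact: mem_gen (set21 a b) | exact: groupX (mem_gen (set22 a b))].
  have -> : (g3 * (b * g3) = b ^+ t)%g.
    apply: acts_uniq (acts_mul h3 (acts_mul hb h3)) (acts_eq (acts_exp _ hb) _).
    by move=> -[q1 q2]; rewrite /trf /=; congr pair; zsolve Hn0.
  exact: groupX (mem_gen (set22 a b)).
have n4 : g4 \in 'N(<<[set a; b]>>)%g.
  apply: inN; apply/subsetP=> y /imsetP[z /set2P[]-> ->]; rewrite conjgE i4.
    have -> : (g4 * (a * g4) = a ^+ (2 * t + 1)%N)%g.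
      apply: acts_uniq (acts_mul h4 (acts_mul ha h4)) (acts_eq (acts_exp _ ha) _).
      by move=> -[q1 q2]; rewrite /trf /=; congr pair; zsolve Hn0.
    exact: groupX (mem_gen (set21 a b)).
  have -> : (g4 * (b * g4) = b ^+ t)%g.
    apply: acts_uniq (acts_mul h4 (acts_mul hb h4)) (acts_eq (acts_exp _ hb) _).
    by move=> -[q1 q2]; rewrite /trf /=; congr pair; zsolve Hn0.
  exact: groupX (mem_gen (set22 a b)).
have sub : gensI t x \subset Pset n.
  rewrite /gensI !subUset !sub1set.
  by rewrite (acts_Pset ha) (acts_Pset hb) (acts_Pset h3) (acts_Pset h4).
apply: dvdn_trans (orbit_dvd A sub) _.
apply: dvdn_trans (card4 n3 n4) _.
have -> : (4 * n = (2 * t.+1 * t.+1) * (2 * 2))%N by rewrite Hn; ring.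
apply: dvdn_mul; first exact: card2_cent.
exact: card2_cent.
Qed.

Theorem partII (t n : nat) (x : pos n) (a b : 'Z_n) :
  (1 <= t)%N -> n = (2 * t.+1 ^ 2)%N ->
     forall A : arr n, (#|class_orbit (gensII a b x) A| %| 2 * n)%N.
Proof.
move=> t1 Hn A.
have n1 : (1 < n)%N by rewrite Hn; nia.
have Hn0 : (n%:R : 'Z_n) = 0 by rewrite pchar_Zp.
set u := (tau2 n ^+ val b * tau1 n ^+ val a)%g.
set g4 := (rmap n ^+ 2 * tau2 n ^+ (2 * val x.2 + 1) * tau1 n ^+ (2 * val x.1 + 2))%g.
set c := ((2 * val x.2 + 1)%:R : 'Z_n).
set d := ((2 * val x.1 + 2)%:R : 'Z_n).
have hu : acts_as u (trf a b).
  apply: acts_eq (acts_mul (acts_exp _ (@acts_t2 n)) (acts_exp _ (@acts_t1 n))) _.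
  by move=> -[q1 q2]; rewrite /trf /= !mul0rn !natr_Zp !subr0.
have h4 : acts_as g4 (fun q => (-1 - q.1 + d, -1 - q.2 + c)).
  apply: acts_eq (acts_mul (acts_mul (@acts_r2 n) (acts_exp _ (@acts_t2 n))) (acts_exp _ (@acts_t1 n))) _.
  by move=> -[q1 q2]; rewrite /trf /=; congr pair; rewrite /c /d; ring.
have mN (z : 'Z_n) : z *+ n = 0 by rewrite -mulr_natr Hn0 mulr0.
have mN1 (z : 'Z_n) : z *+ n.-1 = - z.
  apply/eqP; rewrite -addr_eq0 addrC -mulrS prednK ?mN //; exact: ltnW.
have e_u : (u ^+ n = 1)%g.
  apply: acts_uniq (acts_exp _ hu) (acts_eq (@acts_one n) _).
  by move=> -[q1 q2]; rewrite /trf /= !mN !subr0.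
have e_4 : (g4 ^+ 2 = 1)%g.
  rewrite expgS expg1.
  apply: acts_uniq (acts_mul h4 h4) (acts_eq (@acts_one n) _).
  by move=> -[q1 q2] /=; congr pair; ring.
have i4 : (g4^-1 = g4)%g by apply/eqP; rewrite eq_invg_mul -{1}e_4 expgS expg1.
have sub : gensII a b x \subset Pset n.
  rewrite /gensII !subUset !sub1set.
  by rewrite (acts_Pset hu) (acts_Pset h4).
apply: dvdn_trans (orbit_dvd A sub) _.
rewrite mulnC; apply: card2_norm e_4 => //.
rewrite conjgE i4.
have -> : (g4 * (u * g4) = u ^+ n.-1)%g.
  apply: acts_uniq (acts_mul h4 (acts_mul hu h4)) (acts_eq (acts_exp _ hu) _).
  by move=> -[q1 q2]; rewrite /trf /= !mN1; congr pair; ring.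
exact: mem_cycle.
Qed.

Local Close Scope ring_scope.

Theorem mainTheorem5 (t n : nat) (C0 : {set pos n}) (x : pos n)
    (cw : 'I_n -> pos n) :
  1 <= t -> n = 2 * t.+1 ^ 2 ->
  linear_tEC_DPC t C0 ->
  (* C = x + C0 = {c_1, ..., c_n}, enumerated injectively by cw *)
  injective cw -> translate x C0 = [set cw i | i : 'I_n] ->
  (caseI t C0 ->
     forall A : arr n, dp_sudoku t cw A ->
       #|class_orbit (gensI t x) A| %| 4 * n) /\
  (forall a b : 'Z_n, C0 = gen1 (a, b) -> caseII t C0 ->
     forall A : arr n, dp_sudoku t cw A ->
       #|class_orbit (gensII a b x) A| %| 2 * n).
Proof.
move=> t1 Hn _ _ _; split.
  by move=> _ A _; exact: (partI x t1 Hn A).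
by move=> a b _ _ A _; exact: (partII x a b t1 Hn A).
Qed.
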